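(* Let $(X,d,\mu)$ be geometrically doubling and upper doubling with dominating function $\lambda$ and constant $C_\lambda$, and fix $\varrho>1$ and constants $C_1,C_2>0$. There is a constant $C$ depending only on $C_\lambda$, $N$, $\varrho$, $C_1$, $C_2$ such that: if $f\in L^1_{\mathrm{loc}}(\mu)$, $A\ge0$ and numbers $(f_B)_B$ satisfy the $\mathrm{RBMO}(\mu)$ conditions with constant $A$, then $|f_{B_1}-f_{B_2}|\le CA$ for all balls $B_1,B_2$ with $$d(c(B_1),c(B_2))\le C_1\max\{r(B_1),r(B_2)\}\le C_2\min\{r(B_1),r(B_2)\}.$$
   Context: Balls $B=B(x,r)=\{y:d(y,x)<r\}$ have specified centre $c(B)=c_B=x$ and radius $r(B)=r_B=r>0$; $tB:=B(x,tr)$. Geometrically doubling: there is $N$ such that every ball $B(x,r)$ is covered by at most $N$ balls of radius $r/2$. Upper doubling: $\mu$ is a Borel measure, finite on bounded sets, and $\lambda:X\times(0,\infty)\to(0,\infty)$ satisfies $r\mapsto\lambda(x,r)$ non-decreasing, $\lambda(x,2r)\le C_\lambda\lambda(x,r)$, $\mu(B(x,r))\le\lambda(x,r)$. The $\mathrm{RBMO}(\mu)$ conditions with constant $A$ (parameter $\varrho$) on $f$ and numbers $f_B$ indexed by balls: $\frac{1}{\mu(\varrho B)}\int_B|f-f_B|\,d\mu\le A$ for all balls $B$, and $|f_B-f_{B_1}|\le A\{1+\int_{2B_1\setminus B}\frac{d\mu(x)}{\lambda(c_B,d(x,c_B))}\}$ whenever $B\subset B_1$. $\|f\|_{\mathrm{RBMO}}$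 is the infimum of admissible $A$. *)

(* Defs.v *)
From HB Require Import structures.
From mathcomp Require Import all_boot all_order all_algebra.
From mathcomp Require Import all_classical all_reals all_analysis.
Set Implicit Arguments. Unset Strict Implicit. Unset Printing Implicit Defensive.
Import Order.TTheory GRing.Theory Num.Theory.
Local Open Scope classical_set_scope.
Local Open Scope ring_scope.

Definition is_metric (R : realType) (X : Type) (d : X -> X -> R) : Prop :=
  [/\ forall x y, 0 <= d x y,
      forall x y, d x y = 0 <-> x = y,
      forall x y, d x y = d y x &
      forall x y z, d x z <= d x y + d y z].

Definition mball (R : realType) (X : Type) (d : X -> X -> R) (x : X) (r : R)
  : set X := [set y | d y x < r].

Definition mopen (R : realType) (X : Type) (d : X -> X -> R) (U : set X) : Prop :=
  forall x, U x -> exists2 r, 0 < r & mball d x r `<=` U.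

Definition geom_doubling (R : realType) (X : Type) (d : X -> X -> R) (N : nat)
  : Prop :=
  forall x r, 0 < r -> exists (k : nat) (c : 'I_k -> X),
    (k <= N)%N /\
    mball d x r `<=` \bigcup_(i in [set: 'I_k]) mball d (c i) (r / 2).

Definition upper_doubling (R : realType) (dsp : measure_display)
  (X : measurableType dsp) (d : X -> X -> R)
  (mu : {measure set X -> \bar R}) (lam : X -> R -> R) (Clam : R) : Prop :=
  [/\ forall x r, 0 < r -> 0 < lam x r,
      forall x r s, 0 < r -> r <= s -> lam x r <= lam x s,
      forall x r, 0 < r -> lam x (2 * r) <= Clam * lam x r,
      forall x r, 0 < r -> (mu (mball d x r) <= (lam x r)%:E)%E &
      forall x r, 0 < r -> (mu (mball d x r) < +oo)%E].

Definition loc_integrable (R : realType) (dsp : measure_display)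
  (X : measurableType dsp) (d : X -> X -> R)
  (mu : {measure set X -> \bar R}) (f : X -> R) : Prop :=
  measurable_fun setT f /\
  forall x r, 0 < r -> mu.-integrable (mball d x r) (EFin \o f).

(* The RBMO(mu) conditions with constant A and parameter rho, for f and the
   numbers fB x r = f_{B(x,r)} indexed by balls (centre x, radius r > 0). *)
Definition RBMO_cond (R : realType) (dsp : measure_display)
  (X : measurableType dsp) (d : X -> X -> R)
  (mu : {measure set X -> \bar R}) (lam : X -> R -> R) (rho : R)
  (f : X -> R) (fB : X -> R -> R) (A : R) : Prop :=
  (forall x r, 0 < r ->
     (\int[mu]_(y in mball d x r) (`|f y - fB x r|)%:E
        <= A%:E * mu (mball d x (rho * r)))%E) /\
  (forall x r x1 r1, 0 < r -> 0 < r1 ->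
     mball d x r `<=` mball d x1 r1 ->
     ((`|fB x r - fB x1 r1|)%:E
        <= A%:E * (1 + \int[mu]_(y in mball d x1 (2 * r1) `\` mball d x r)
                          ((lam x (d y x))^-1)%:E))%E).

(* Main.v *)
Require Import Defs.
From HB Require Import structures.
From mathcomp Require Import all_boot all_order all_algebra.
From mathcomp Require Import all_classical all_reals all_analysis.
From mathcomp Require Import lra ring.
Import Order.TTheory GRing.Theory Num.Theory.
Local Open Scope classical_set_scope.
Local Open Scope ring_scope.

Lemma my_le_int (R : realType) (dsp : measure_display) (X : measurableType dsp)
  (mu : {measure set X -> \bar R}) (D : set X) (f g : X -> \bar R) :
  (forall x, D x -> (0 <= f x)%E) -> (forall x, D x -> (f x <= g x)%E) ->
  (\int[mu]_(x in D) f x <= \int[mu]_(x in D) g x)%E.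
Proof.
move=> f0 fg.
have g0 : forall x, D x -> (0 <= g x)%E.
  by move=> x Dx; apply: le_trans (f0 _ Dx) (fg _ Dx).
rewrite !ge0_integralE //; apply: le_ereal_sup => _ [h hf <-]; exists h => //.
move=> x; apply: le_trans (hf x) _; rewrite !patchE; case: ifPn => // /set_mem Dx.
exact: fg.
Qed.

Lemma mball_open (R : realType) (X : Type) (d : X -> X -> R) x r :
  is_metric d -> mopen d (mball d x r).
Proof.
move=> [d0 deq dsym dtri] y; rewrite /mball /= => hy; exists (r - d y x); first by rewrite subr_gt0.
move=> z; rewrite /mball /= => hz; have := dtri z y x; lra.
Qed.

Lemma mball_meas (R : realType) (dsp : measure_display) (X : measurableType dsp)
  (d : X -> X -> R) x r :
  is_metric d -> @measurable dsp X = <<s [set U | mopen d U] >> ->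
  measurable (mball d x r).
Proof.
move=> md hm; rewrite hm; apply: sub_sigma_algebra; exact: mball_open.
Qed.

Lemma lam_pow (R : realType) (dsp : measure_display) (X : measurableType dsp)
  (d : X -> X -> R) (mu : {measure set X -> \bar R}) (lam : X -> R -> R) Clam :
  upper_doubling d mu lam Clam ->
  forall n x r, 0 < r -> lam x (2 ^+ n * r) <= Clam ^+ n * lam x r.
Proof.
move=> [u1 u2 u3 u4 u5] n x r r0.
have C0 : 0 <= Clam.
  have := u3 x r r0; have := u1 x (2 * r) ltac:(lra); have := u1 x r r0.
  move=> l0 l20 h; have : 0 < Clam * lam x r by apply: Order.POrderTheory.lt_le_trans l20 h.
  by rewrite pmulr_lgt0 // => /ltW.
elim: n => [|n IH]; first by rewrite !expr0 !mul1r.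
rewrite exprS -mulrA.
have p : 0 < 2 ^+ n * r by rewrite mulr_gt0 // exprn_gt0.
apply: le_trans (u3 _ _ p) _; rewrite exprS -mulrA; exact: ler_wpM2l.
Qed.

Lemma int_bound (R : realType) (dsp : measure_display) (X : measurableType dsp)
  (d : X -> X -> R) (mu : {measure set X -> \bar R}) (lam : X -> R -> R) Clam
  (D : set X) x r S :
  is_metric d -> @measurable dsp X = <<s [set U | mopen d U] >> ->
  upper_doubling d mu lam Clam -> 0 < r -> 0 < S ->
  measurable D -> D `<=` mball d x S -> (forall y, D y -> r <= d y x) ->
  (\int[mu]_(y in D) ((lam x (d y x))^-1)%:E <= ((lam x r)^-1 * lam x S)%:E)%E.
Proof.
move=> md hm ud r0 S0 mD DS Dr; have [u1 u2 u3 u4 u5] := ud.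
have lr0 : 0 < lam x r by exact: u1.
apply: (@le_trans _ _ (\int[mu]_(y in D) (cst ((lam x r)^-1)%:E y))%E).
  apply: my_le_int => y Dy.
    have := Dr y Dy => hy.
    by rewrite lee_fin invr_ge0 ltW // u1 //; lra.
  have := Dr y Dy => hy.
  have ly : 0 < lam x (d y x) by apply: u1; lra.
  rewrite lee_fin lef_pV2 ?posrE //; exact: u2.
rewrite integral_cst // EFinM.
apply: lee_wpmul2l; first by rewrite lee_fin invr_ge0 ltW.
apply: le_trans (u4 x S S0).
apply: le_measure; rewrite ?inE //; exact: mball_meas.
Qed.

Lemma step (R : realType) (dsp : measure_display) (X : measurableType dsp)
  (d : X -> X -> R) (mu : {measure set X -> \bar R}) (lam : X -> R -> R) Clam
  rho f fB A x r x' r' S n :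
  is_metric d -> @measurable dsp X = <<s [set U | mopen d U] >> ->
  upper_doubling d mu lam Clam -> RBMO_cond d mu lam rho f fB A -> 0 <= A ->
  0 < r -> 0 < r' -> mball d x r `<=` mball d x' r' -> 0 < S ->
  mball d x' (2 * r') `<=` mball d x S -> S <= 2 ^+ n * r ->
  `|fB x r - fB x' r'| <= A * (1 + Clam ^+ n).
Proof.
move=> md hm ud [_ rb] A0 r0 r'0 sub S0 sub2 Sn.
have [u1 u2 u3 u4 u5] := ud.
have := rb x r x' r' r0 r'0 sub.
set I := (\int[mu]_(y in _) _)%E => h.
have I0 : (0 <= I)%E.
  apply: integral_ge0 => y [_ /= hy]; rewrite lee_fin invr_ge0 ltW // u1 //.
  by move: hy; rewrite /mball /= => /negP; rewrite -leNgt => hy; lra.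
have Ic : (I <= (Clam ^+ n)%:E)%E.
  apply: le_trans.
    apply: (@int_bound R dsp X d mu lam Clam (mball d x' (2 * r') `\` mball d x r) x r S) => //.
    - apply: measurableD; exact: mball_meas.
    - by move=> y [+ _]; exact: sub2.
    - by move=> y [_ /= hy]; move: hy; rewrite /mball /= => /negP; rewrite -leNgt.
  rewrite lee_fin ler_pdivrMl ?u1 // mulrC.
  apply: (le_trans _ (@lam_pow _ _ _ _ _ _ _ ud n x r r0)); apply: u2 => //.
have : ((`|fB x r - fB x' r'|)%:E <= A%:E * (1 + Clam ^+ n)%:E)%E.
  apply: le_trans h _; apply: lee_wpmul2l; first by rewrite lee_fin.
  by rewrite EFinD; apply: leeD2l.
by rewrite -EFinM lee_fin.
Qed.

Theorem lemma5p2 (R : realType) (Clam : R) (N : nat) (rho C1 C2 : R) :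
  1 < rho -> 0 < C1 -> 0 < C2 ->
  exists C : R,
  forall (dsp : measure_display) (X : measurableType dsp) (d : X -> X -> R)
    (mu : {measure set X -> \bar R}) (lam : X -> R -> R),
    is_metric d ->
    @measurable dsp X = <<s [set U | mopen d U] >> ->
    geom_doubling d N ->
    upper_doubling d mu lam Clam ->
  forall (f : X -> R) (A : R) (fB : X -> R -> R),
    loc_integrable d mu f -> 0 <= A ->
    RBMO_cond d mu lam rho f fB A ->
  forall (x1 x2 : X) (r1 r2 : R), 0 < r1 -> 0 < r2 ->
    d x1 x2 <= C1 * Num.max r1 r2 ->
    C1 * Num.max r1 r2 <= C2 * Num.min r1 r2 ->
    `|fB x1 r1 - fB x2 r2| <= C * A.
Proof.
move=> rho1 C10 C20.
set a := C2 / C1.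
have a0 : 0 < a by rewrite /a divr_gt0.
set K := 3 * (1 + a + C2).
have K0 : 0 <= K by rewrite /K; lra.
set n := Num.Def.archi_bound K.
have Kn : K <= 2 ^+ n.
  apply: ltW; apply: (lt_le_trans (archi_boundP K0)).
  have : (n <= 2 ^ n)%N by apply: ltnW; apply: ltn_expl.
  by rewrite -(ler_nat R) natrX.
exists (2 * (1 + Clam ^+ n)).
move=> dsp X d mu lam md hm _ ud f A fB _ A0 rb x1 x2 r1 r2 r10 r20 hd hMm.
have [d0 deq dsym dtri] := md.
set M := Num.max r1 r2; set m := Num.min r1 r2.
have r1M : r1 <= M by rewrite /M le_max lexx.
have r2M : r2 <= M by rewrite /M le_max lexx orbT.
have mr1 : m <= r1 by rewrite /m ge_min lexx.
have mr2 : m <= r2 by rewrite /m ge_min lexx orbT.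
have hM : M <= a * m.
  rewrite -(ler_pM2l C10).
  have -> : C1 * (a * m) = C2 * m by rewrite /a; field; rewrite gt_eqF.
  exact: hMm.
have am1 : a * m <= a * r1 by rewrite ler_pM2l.
have am2 : a * m <= a * r2 by rewrite ler_pM2l.
have cm1 : C2 * m <= C2 * r1 by rewrite ler_pM2l.
have cm2 : C2 * m <= C2 * r2 by rewrite ler_pM2l.
have d12 := d0 x1 x2.
have hd2 : d x1 x2 <= C2 * m by apply: le_trans hd hMm.
set Rb := r1 + r2 + d x1 x2.
have Rb0 : 0 < Rb by rewrite /Rb; lra.
have K1 : K * r1 = 3 * (r1 + a * r1 + C2 * r1) by rewrite /K; ring.
have K2 : K * r2 = 3 * (r2 + a * r2 + C2 * r2) by rewrite /K; ring.
have Kn1 : K * r1 <= 2 ^+ n * r1 by rewrite ler_pM2r.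
have Kn2 : K * r2 <= 2 ^+ n * r2 by rewrite ler_pM2r.
have h1 : `|fB x1 r1 - fB x1 Rb| <= A * (1 + Clam ^+ n).
  apply: (@step R dsp X d mu lam Clam rho f fB A x1 r1 x1 Rb (3 * Rb) n) => //.
  - by move=> y; rewrite /mball /Rb /=; lra.
  - by rewrite /Rb; lra.
  - by move=> y; rewrite /mball /Rb /=; lra.
  - rewrite /Rb; lra.
have h2 : `|fB x2 r2 - fB x1 Rb| <= A * (1 + Clam ^+ n).
  apply: (@step R dsp X d mu lam Clam rho f fB A x2 r2 x1 Rb (3 * Rb) n) => //.
  - move=> y; rewrite /mball /Rb /= => hy.
    have := dtri y x2 x1; rewrite (dsym x2 x1).
    move: hy r10; clear; lra.
  - by rewrite /Rb; lra.
  - move=> y; rewrite /mball /Rb /= => hy.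
    have := dtri y x1 x2; move: hy r10 r20; clear; lra.
  - rewrite /Rb; lra.
have := ler_normD (fB x1 r1 - fB x1 Rb) (fB x1 Rb - fB x2 r2).
rewrite (distrC (fB x1 Rb)).
have -> : fB x1 r1 - fB x1 Rb + (fB x1 Rb - fB x2 r2) = fB x1 r1 - fB x2 r2 by ring.
move: h1 h2 A0; clear; lra.
Qed.
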